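(* Let $n\ge 1$ and let $f\colon \mathbb Z_2^n\to\mathbb Z_2^n$ be any map. For $\vec y\in\mathbb Z_2^n$ let $A_{\vec y}=\{\vec x\in\mathbb Z_2^n : f(\vec x)=\vec y\}$ and let $d=\max_{\vec y\in\mathbb Z_2^n}|A_{\vec y}|$. Then for every integer $q$ with $0\le q<\lceil \log_2 d\rceil$ there is no reversible circuit consisting of NOT, CNOT and 2-CNOT gates on $n+q$ lines that implements $f$ with $q$ additional inputs.
   Context: For $m\ge1$, a $k$-CNOT gate $C^m_{i_1,\dots,i_k;j}$ on $m$ lines (with $j\notin\{i_1,\dots,i_k\}$, indices distinct) is the transformation $\mathbb Z_2^m\to\mathbb Z_2^m$, $\langle x_1,\dots,x_m\rangle\mapsto\langle x_1,\dots,x_j\oplus (x_{i_1}\wedge\dots\wedge x_{i_k}),\dots,x_m\rangle$ (only coordinate $j$ changes). NOT is the case $k=0$ (i.e. $x_j\mapsto x_j\oplus 1$), CNOT is $k=1$, 2-CNOT (Toffoli) is $k=2$. A reversible circuit on $m$ lines is a finite sequence of such gates; it computes the composition $g\colon\mathbb Z_2^m\to\mathbb Z_2^m$ of its gates, and its complexity is the number of gates. Let $\phi_{n,n+q}(\langle x_1,\dots,x_n\rangle)=\langle x_1,\dots,x_n,0,\dots,0\rangle\in\mathbb Z_2^{n+q}$ and $\psi_{n+q,n}(\langle x_1,\dots,x_{n+q}\rangle)=\langle x_1,\dots,x_n\rangle$. A circuit on $n+q$ lines computing $g$ implements $f\colon\mathbb Z_2^n\to\mathbb Z_2^n$ with $q$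 additional inputs if $\psi_{n+q,n}(g(\phi_{n,n+q}(\vec x)))=f(\vec x)$ for all $\vec x\in\mathbb Z_2^n$. *)

(* Defs.v *)
From mathcomp Require Import all_boot.
Set Implicit Arguments. Unset Strict Implicit. Unset Printing Implicit Defensive.

(* Boolean vectors of Z_2^m, indexed by lines 'I_m (line i+1 of the paper is index i). *)
Definition bvec (m : nat) := {ffun 'I_m -> bool}.

Record gate (m : nat) := Gate { ctrls : seq 'I_m; tgt : 'I_m }.

Definition gate_ok (m : nat) (g : gate m) : bool :=
  [&& uniq (ctrls g), tgt g \notin ctrls g & size (ctrls g) <= 2].

(* Semantics: x_j <- x_j xor (conjunction of controls); empty conjunction = 1 (NOT). *)
Definition apply_gate (m : nat) (g : gate m) (x : bvec m) : bvec m :=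
  [ffun j => if j == tgt g then x j (+) all (fun i => x i) (ctrls g) else x j].

Definition circuit (m : nat) := seq (gate m).

Definition run (m : nat) (c : circuit m) (x : bvec m) : bvec m :=
  foldl (fun y g => apply_gate g y) x c.

Definition phi (n q : nat) (x : bvec n) : bvec (n + q) :=
  [ffun i : 'I_(n + q) => match split i with inl j => x j | inr _ => false end].

Definition psi (n q : nat) (y : bvec (n + q)) : bvec n :=
  [ffun j : 'I_n => y (lshift q j)].

Definition implements (n q : nat) (c : circuit (n + q)) (f : bvec n -> bvec n) : Prop :=
  forall x : bvec n, @psi n q (run c (@phi n q x)) = f x.

Definition max_preimage (n : nat) (f : bvec n -> bvec n) : nat :=
  \max_(y : bvec n) #|[set x : bvec n | f x == y]|.

(* ceil(log2 d) for d >= 1: the least e with d <= 2^e (MathComp's up_log). *)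
Definition ceil_log2 (d : nat) : nat := up_log 2 d.

(* Main.v *)
Require Import Defs.
From mathcomp Require Import all_boot.

Lemma apply_gateK (m : nat) (g : gate m) : gate_ok g ->
  involutive (apply_gate g).
Proof.
case/and3P=> _ nt _ x; apply/ffunP=> j; rewrite !ffunE.
case: eqP => [->|//]; rewrite ?eqxx -addbA.
have -> : all (fun i => apply_gate g x i) (ctrls g) = all (fun i => x i) (ctrls g).
  apply: eq_in_all => i ic; rewrite ffunE; case: eqP => // E.
  by move: nt; rewrite -E ic.
by rewrite addbb addbF.
Qed.

Lemma run_inj (m : nat) (c : circuit m) : all (@gate_ok m) c -> injective (run c).
Proof.
elim: c => [|g c IH] /=; first by move=> _ x y.
case/andP=> gok cok x y H.
have H2 : apply_gate g x = apply_gate g y by apply: (IH cok); exact: H.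
have K := @apply_gateK _ _ gok; by rewrite -(K x) H2 K.
Qed.

Theorem mainTheorem1 (n : nat) (f : bvec n -> bvec n) (q : nat) :
  0 < n -> q < ceil_log2 (max_preimage f) ->
  ~ exists c : circuit (n + q), all (@gate_ok (n + q)) c /\ implements c f.
Proof.
move=> _ hq [c [cok imp]].
suff : max_preimage f <= 2 ^ q.
  by move/(up_log_min (isT : 1 < 2)); rewrite /ceil_log2 leqNgt hq.
apply/bigmax_leqP => y _.
pose h (x : bvec n) : bvec q := [ffun k => run c (phi q x) (rshift n k)].
have hinj : {in [set x | f x == y] &, injective h}.
  move=> x1 x2; rewrite !inE => /eqP e1 /eqP e2 eh.
  have E : run c (phi q x1) = run c (phi q x2).
    apply/ffunP=> i; rewrite -(splitK i); case: (split i) => [j|k].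
    - have := f_equal (fun v : bvec n => v j) (imp x1).
      have := f_equal (fun v : bvec n => v j) (imp x2).
      rewrite !ffunE /= e1 e2 => -> ->; done.
    - by have := f_equal (fun v : bvec q => v k) eh; rewrite !ffunE.
  have := @run_inj _ _ cok _ _ E => /(f_equal (fun v : bvec (n + q) => fun j => v (lshift q j))) E2.
  apply/ffunP=> j; have := f_equal (fun F => F j) E2.
  rewrite /= !ffunE /= -[lshift q j]/(unsplit (inl _ j)) unsplitK //.
rewrite -(card_in_imset hinj).
apply: leq_trans (max_card _) _.
by rewrite card_ffun card_bool card_ord.
Qed.
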